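(* Let $u$ be a parking sorted configuration on $K_{m,n}$ with $u_{a_m}\ge 0$, and let $r(u)=(r_1,\dots,r_n)$ be its $r$-vector. Write $u_{a_m}+1=nQ+R$ with $Q,R\in\mathbb N$ and $0\le R<n$. Then $$\mathrm{rank}(u)+1=\sum_{i=1}^n\max\{0,\;Q+\chi(i\le R)+r_i-1\},$$ where $\chi(\mathcal P)=1$ if the proposition $\mathcal P$ is true and $0$ otherwise.
   Context: Let $m,n\ge 1$. $K_{m,n}$ is the complete bipartite graph with vertex set $V=A_m\sqcup B_n$, $A_m=\{a_1,\dots,a_m\}$, $B_n=\{b_1,\dots,b_n\}$, with exactly one edge $\{a_i,b_j\}$ for every $i,j$; $a_m$ is the sink. A configuration is a function $u:V\to\mathbb Z$; $\mathrm{degree}(u)=\sum_c u_c$. For $c\in V$ with graph degree $d_c$ ($d_{a_i}=n$, $d_{b_j}=m$), $\Delta^{(c)}=d_c e_c-\sum_{c'\text{ adjacent to }c}e_{c'}$, with $e_c$ the indicator configuration of $c$; $\Delta^{(C)}=\sum_{c\in C}\Delta^{(c)}$. Toppling equivalence: difference is an integer combination of the $\Delta^{(c)}$. Effective: toppling equivalent to a non-negative configuration. $\mathrm{rank}(u)=-1+\min\{\mathrm{degree}(f): f\ge0,\ u-f\text{ not effective}\}$. A configuration $u$ is parking if $u_c\ge0$ for all $c\neq a_m$ and for every non-empty $C\subseteq V\setminus\{a_m\}$, $u-\Delta^{(C)}$ has a negative value at some vertex other than $a_m$. $u$ is sorted if $u_{a_1}\le\dots\le u_{a_{m-1}}$ and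 $u_{b_1}\le\dots\le u_{b_n}$ (no condition at the sink). For a configuration $u$ with $0\le u_{a_j}\le n-1$ ($j<m$) and $0\le u_{b_i}\le m-1$ that is sorted (in particular any parking sorted configuration), its $r$-vector is $r(u)=(r_1,\dots,r_n)$ with $r_i=u_{b_i}+1-\#\{j\in\{1,\dots,m-1\}: u_{a_j}+1\le i-1\}$; it does not depend on $u_{a_m}$. *)

(* Defs.v *)
From HB Require Import structures.
From mathcomp Require Import all_boot all_order all_algebra.
Set Implicit Arguments. Unset Strict Implicit. Unset Printing Implicit Defensive.
Import Order.TTheory GRing.Theory Num.Theory.
Local Open Scope ring_scope.

(* Vertices of K_{m,n}: inl i = a_{i+1} (i < m), inr j = b_{j+1} (j < n).
   The sink a_m is inl i with val i = m - 1. *)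
Notation vert m n := ('I_m + 'I_n)%type.

Definition config (m n : nat) := vert m n -> int.

Definition is_sink (m n : nat) (c : vert m n) : bool :=
  match c with inl i => (val i == m.-1)%N | inr _ => false end.

Definition adj (m n : nat) (c x : vert m n) : bool :=
  match c, x with
  | inl _, inr _ => true
  | inr _, inl _ => true
  | _, _ => false
  end.

Definition gdeg (m n : nat) (c : vert m n) : int :=
  match c with inl _ => n%:Z | inr _ => m%:Z end.

Definition degree (m n : nat) (u : config m n) : int := \sum_(c : vert m n) u c.

Definition Delta (m n : nat) (c : vert m n) : config m n :=
  fun x => (if x == c then gdeg c else 0) - (adj c x)%:Z.

Definition DeltaS (m n : nat) (C : {set vert m n}) : config m n :=
  fun x => \sum_(c in C) Delta c x.

Definition topp_equiv (m n : nat) (u v : config m n) : Prop :=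
  exists z : vert m n -> int,
    forall x, u x - v x = \sum_(c : vert m n) z c * Delta c x.

Definition effective (m n : nat) (u : config m n) : Prop :=
  exists f : config m n, (forall x, 0 <= f x) /\ topp_equiv u f.

(* rank_is u k  <->  rank(u) = k, i.e.
   k + 1 = min { degree f : f >= 0, u - f not effective }. *)
Definition rank_is (m n : nat) (u : config m n) (k : int) : Prop :=
  (exists f : config m n, (forall x, 0 <= f x) /\
      ~ effective (fun x => u x - f x) /\ degree f = k + 1) /\
  (forall f : config m n, (forall x, 0 <= f x) ->
      ~ effective (fun x => u x - f x) -> k + 1 <= degree f).

Definition parking (m n : nat) (u : config m n) : Prop :=
  (forall c, ~~ is_sink c -> 0 <= u c) /\
  (forall C : {set vert m n}, C != set0 -> (forall c, c \in C -> ~~ is_sink c) ->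
     exists c, ~~ is_sink c /\ u c - DeltaS C c < 0).

Definition sorted_config (m n : nat) (u : config m n) : Prop :=
  (forall i j : 'I_m, (i <= j)%N -> (j < m.-1)%N -> u (inl i) <= u (inl j)) /\
  (forall i j : 'I_n, (i <= j)%N -> u (inr i) <= u (inr j)).

(* r-vector, 0-indexed: r (j : 'I_n) is r_{j+1}
   = u_{b_{j+1}} + 1 - #{ i in 1..m-1 : u_{a_i} + 1 <= j }. *)
Definition rvec (m n : nat) (u : config m n) (j : 'I_n) : int :=
  u (inr j) + 1 -
  (#|[set i : 'I_m | (val i < m.-1)%N && (u (inl i) + 1 <= (val j)%:Z)]|)%:Z.

(* Main.v *)
Require Import Defs.
From HB Require Import structures.
From mathcomp Require Import all_boot all_order all_algebra.
From mathcomp Require Import zify ring lra.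
Import Order.TTheory GRing.Theory Num.Theory.
Local Open Scope ring_scope.
Set Implicit Arguments.
Unset Strict Implicit.

Lemma sum_const_int (n : nat) (c : int) : \sum_(l < n) c = n%:Z * c.
Proof. by rewrite sumr_const card_ord -mulr_natl natz. Qed.

Definition fl (m : nat) (x : int) : int := (x %/ m%:Z)%Z.

Lemma fl_shift (m : nat) (x : int) : (0 < m)%N -> fl m (x + m%:Z) = fl m x + 1.
Proof. rewrite /fl => hm; nia. Qed.

Lemma fl_shiftN (m : nat) (x : int) : (0 < m)%N -> fl m (x - m%:Z) = fl m x - 1.
Proof. rewrite /fl => hm; nia. Qed.
Lemma fl_ge0 (m : nat) (x : int) : (0 < m)%N -> 0 <= x -> 0 <= fl m x.
Proof. rewrite /fl => hm; nia. Qed.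
Lemma fl_neg (m : nat) (x : int) : (0 < m)%N -> x < 0 -> fl m x <= -1.
Proof. rewrite /fl => hm; nia. Qed.
Lemma fl_m2 (m : nat) (x : int) : (0 < m)%N -> fl m x <= -2 -> x + m%:Z + 1 <= 0.
Proof. rewrite /fl => hm; nia. Qed.
Lemma sq_dec (a b : int) (m : nat) : (0 < m)%N -> a + m%:Z + 1 <= b ->
  (b - m%:Z) ^+ 2 + (a + m%:Z) ^+ 2 - (a ^+ 2 + b ^+ 2) < 0.
Proof. move=> hm hab; rewrite !expr2; nia. Qed.

Lemma exists_argmax (f : nat -> int) (n : nat) :
  exists k, (k <= n)%N /\ forall l, (l <= n)%N -> f l <= f k.
Proof.
elim: n => [|n [k [hk hmax]]].
  by exists 0%N; split=> // l; rewrite leqn0 => /eqP ->.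
case: (lerP (f n.+1) (f k)) => h.
- exists k; split; first by apply: leq_trans hk _.
  move=> l; rewrite leq_eqVlt => /orP [/eqP -> //|]; rewrite ltnS; exact: hmax.
- exists n.+1; split => // l; rewrite leq_eqVlt => /orP [/eqP -> //|].
  rewrite ltnS => /hmax hl; exact: (le_trans hl (ltW h)).
Qed.

Lemma sum_swap2 (N : nat) (F1 F2 : 'I_N -> int) (a b : 'I_N) : a != b ->
  (forall x, x != a -> x != b -> F1 x = F2 x) ->
  \sum_x F1 x - F1 a - F1 b = \sum_x F2 x - F2 a - F2 b.
Proof.
move=> hab hF.
rewrite [\sum_x F1 x](bigD1 a) //= [\sum_x F2 x](bigD1 a) //=.
rewrite [\sum_(i | i != a) F1 i](bigD1 b) //=; last by rewrite eq_sym.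
rewrite [\sum_(i | i != a) F2 i](bigD1 b) //=; last by rewrite eq_sym.
rewrite (eq_bigr (fun x => F2 x)); last by move=> x /andP [hxa hxb]; apply: hF.
ring.
Qed.


Lemma CA (m : nat) (m0 : (0 < m)%N) (n : nat) : forall (E e t : nat -> int),
  (forall i j, (i <= j)%N -> (j < n)%N -> E i <= E j) ->
  (forall i j, (i < n)%N -> (j < n)%N -> E j <= E i + m%:Z) ->
  (forall l, (l < n)%N -> e l <= E l) ->
  (forall i, (i < n)%N -> \sum_(l < n) fl m (e l - t i) + (i.+1)%:Z <= 0) ->
  \sum_(l < n) e l + n%:Z <= \sum_(i < n) Num.min (E i + 1) (t i).
Proof.
elim: n => [|n IH] E e0 t hE hR.
  by move=> _ _; rewrite !big_ord0.
pose P e := (forall l, (l < n.+1)%N -> e l <= E l) ->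
  (forall i, (i < n.+1)%N -> \sum_(l < n.+1) fl m (e l - t i) + (i.+1)%:Z <= 0) ->
  \sum_(l < n.+1) e l + n.+1%:Z <= \sum_(i < n.+1) Num.min (E i + 1) (t i).
pose mu (e : nat -> int) := absz (\sum_(l < n.+1) e l ^+ 2).
suff step : forall e, (forall e', (mu e' < mu e)%N -> P e') -> P e.
  have : forall N e, (mu e < N)%N -> P e.
    elim=> [|N IHN] e //; rewrite ltnS => hN.
    apply: step => e' he'; apply: IHN; exact: leq_trans he' hN.
  by move=> H; apply: (H (mu e0).+1).
move=> e IHe he hne.
have [k [hk hmax]] := exists_argmax e n.
have hkn : (k < n.+1)%N by [].
case: (boolP (e k + 1 <= t n)) => hcase.
-
  pose e1 := fun l => if l == k then e n else e l.
  have key : forall g : int -> int,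
      \sum_(l < n) g (e1 l) + g (e k) = \sum_(l < n.+1) g (e l).
    move=> g; rewrite big_ord_recr /=.
    case: (ltnP k n) => hkn'.
    + rewrite (bigD1 (Ordinal hkn')) //= [X in _ = X + _](bigD1 (Ordinal hkn')) //=.
      rewrite /e1 eqxx.
      rewrite (eq_bigr (fun l : 'I_n => g (e l))); first by lia.
      move=> l hl; rewrite /e1 (_ : ((l : nat) == k) = false) //; exact: negbTE hl.
    + have hk' : k = n by apply/eqP; rewrite eqn_leq hk hkn'.
      rewrite (eq_bigr (fun l : 'I_n => g (e l))); first by rewrite hk'.
      by move=> l _; rewrite /e1 hk' (ltn_eqF (ltn_ord l)).
  have IH1 := IH E e1 t.
  have := key id; rewrite /= => keyid.
  have : \sum_(l < n) e1 l + n%:Z <= \sum_(i < n) Num.min (E i + 1) (t i).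
    apply: IH1.
    + move=> i j hij hj; apply: hE => //; exact: ltnW.
    + move=> i j hi hj; apply: hR; exact: ltnW.
    + move=> l hl; rewrite /e1; case: eqP => [->|_].
      * exact: (le_trans (hmax n (leqnn n)) (he k hkn)).
      * apply: he; exact: ltnW.
    + move=> i hi.
      case: (boolP (t i <= e k)) => hti.
      * have := key (fun x => fl m (x - t i)); rewrite /= => keyi.
        have h1 := hne i (ltnW hi).
        have h2 : 0 <= fl m (e k - t i) by apply: fl_ge0 => //; lia.
        move: h1; rewrite -keyi; lia.
      * have hb : forall l : 'I_n, fl m (e1 l - t i) <= -1.
          move=> l; apply: fl_neg => //.
          have : e1 l <= e k.
            rewrite /e1; case: eqP => _; apply: hmax => //; exact: ltnW.
          move: hti; rewrite -ltNge; lia.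
        have : \sum_(l < n) fl m (e1 l - t i) <= \sum_(l < n) (-1 : int).
          by apply: ler_sum => l _; exact: hb l.
        rewrite sum_const_int; lia.
  move=> hIH.
  rewrite -keyid [\sum_(i < n.+1) _]big_ord_recr /=.
  have hEn : E k <= E n by apply: hE.
  have hek := he k hkn.
  have hmin : e k + 1 <= Num.min (E n + 1) (t n) by rewrite le_min; apply/andP; split; lia.
  apply: le_trans (lerD hIH hmin); rewrite le_eqVlt; apply/orP; left; apply/eqP; rewrite -addn1 PoszD; ring.
-
  have hn := hne n (ltnSn n).
  have hk0 : 0 <= fl m (e k - t n) by apply: fl_ge0 => //; move: hcase; rewrite -ltNge; lia.
  have /existsP [l hl] : [exists l : 'I_n.+1, fl m (e l - t n) <= -2].
    apply: contraT => /existsPn hno.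
    have hb : forall l : 'I_n.+1, 0 <= fl m (e l - t n) + 1.
      by move=> l; have := hno l; rewrite -ltNge; lia.
    have : \sum_(l < n.+1) (fl m (e l - t n) + 1) >= fl m (e k - t n) + 1.
      rewrite (bigD1 (Ordinal hkn)) //=; rewrite lerDl; apply: sumr_ge0 => i _; exact: hb.
    rewrite big_split /= sum_const_int mulr1 => h.
    have := le_trans h hn; rewrite /=; lia.
  have hlt : e l + m%:Z + 1 <= t n by have := @fl_m2 m _ m0 hl; lia.
  have hlk : (l : nat) != k.
    apply/negP => /eqP hlk; move: hlt hcase; rewrite hlk; lia.
  pose e2 := fun x => if x == (l : nat) then e k - m%:Z else if x == k then e l + m%:Z else e x.
  have swap : forall G : int -> int,
      \sum_(x < n.+1) G (e2 x) = \sum_(x < n.+1) G (e x) - G (e l) - G (e k)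
                                  + G (e k - m%:Z) + G (e l + m%:Z).
    move=> G.
    have hag : forall x : 'I_n.+1, x != l -> x != Ordinal hkn -> G (e2 x) = G (e x).
      move=> x hx1 hx2; rewrite /e2.
      have -> : ((x : nat) == l) = false by apply/negbTE; exact: hx1.
      have -> : ((x : nat) == k) = false by apply/negbTE; exact: hx2.
      by [].
    have hlk' : l != Ordinal hkn by exact: hlk.
    have H := @sum_swap2 _ (fun x => G (e2 x)) (fun x => G (e x)) _ _ hlk' hag.
    have e2l : e2 l = e k - m%:Z by rewrite /e2 eqxx.
    have e2k : e2 k = e l + m%:Z by rewrite /e2 (eq_sym k) (negbTE hlk) eqxx.
    rewrite /= e2l e2k in H.
    by rewrite -H; ring.
  have hsum := swap id.
  have hsq := swap (fun x => x ^+ 2).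
  have hmu : (mu e2 < mu e)%N.
    rewrite /mu hsq /=.
    have hpos : 0 <= \sum_(x < n.+1) e2 x ^+ 2.
      by apply: sumr_ge0 => x _; apply: sqr_ge0.
    have hpos2 : 0 <= \sum_(x < n.+1) e x ^+ 2.
      by apply: sumr_ge0 => x _; apply: sqr_ge0.
    move: hpos; rewrite hsq => hpos.
    have hX : (e k - m%:Z) ^+ 2 + (e l + m%:Z) ^+ 2 - (e l ^+ 2 + e k ^+ 2) < 0.
      apply: sq_dec => //; move: hlt hcase; rewrite -ltNge; lia.
    move: hpos hX.
    set S := \sum_(x < n.+1) e x ^+ 2.
    set X := (e k - m%:Z) ^+ 2 + (e l + m%:Z) ^+ 2 - (e l ^+ 2 + e k ^+ 2).
    have -> : S - e l ^+ 2 - e k ^+ 2 + (e k - m%:Z) ^+ 2 + (e l + m%:Z) ^+ 2 = S + X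
      by rewrite /X; ring.
    move: hpos2; rewrite -/S.
    clearbody S X; lia.
  have he2 : forall x, (x < n.+1)%N -> e2 x <= E x.
    move=> x hx; rewrite /e2.
    case: eqP => [hxl|_].
      have := hR l k (ltn_ord l) hkn; have := he k hkn; rewrite hxl; lia.
    case: eqP => [->|_]; last exact: he.
    have := he k hkn; lia.
  have hne2 : forall i, (i < n.+1)%N -> \sum_(x < n.+1) fl m (e2 x - t i) + (i.+1)%:Z <= 0.
    move=> i hi.
    rewrite (swap (fun x => fl m (x - t i))) /=.
    have h1 : fl m (e k - m%:Z - t i) = fl m (e k - t i) - 1.
      by rewrite -fl_shiftN //; congr fl; ring.
    have h2 : fl m (e l + m%:Z - t i) = fl m (e l - t i) + 1.
      by rewrite -fl_shift //; congr fl; ring.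
    rewrite h1 h2.
    apply: le_trans (hne i hi); rewrite le_eqVlt; apply/orP; left; apply/eqP; ring.
  have hs : \sum_(x < n.+1) e2 x = \sum_(x < n.+1) e x by rewrite hsum /=; ring.
  have := IHe e2 hmu he2 hne2.
  by rewrite hs.
Qed.

Lemma eq_inl (m n : nat) (a b : 'I_m) : (inl a == inl b :> vert m n) = (a == b).
Proof. by apply/eqP/eqP => [[]|->]. Qed.
Lemma eq_inr (m n : nat) (a b : 'I_n) : (inr a == inr b :> vert m n) = (a == b).
Proof. by apply/eqP/eqP => [[]|->]. Qed.
Lemma eq_inlr (m n : nat) (a : 'I_m) (b : 'I_n) : (inl a == inr b :> vert m n) = false.
Proof. by apply/eqP. Qed.
Lemma eq_inrl (m n : nat) (a : 'I_m) (b : 'I_n) : (inr b == inl a :> vert m n) = false.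
Proof. by apply/eqP. Qed.

Lemma LZa (m n : nat) (z : vert m n -> int) (i : 'I_m) :
  \sum_(c : vert m n) z c * Delta c (inl i) = n%:Z * z (inl i) - \sum_(j : 'I_n) z (inr j).
Proof.
rewrite big_sumType /=.
rewrite (bigD1 i) //= big1 => [|i' hi'].
  rewrite /Delta /= eq_inl eqxx /= -sumrN.
  rewrite (eq_bigr (fun j => - z (inr j))) => [|j _]; first by ring.
  by rewrite /Delta /=; ring.
rewrite /Delta /= eq_inl.
have -> : (i == i') = false by apply/negbTE; rewrite eq_sym.
by rewrite /=; ring.
Qed.

Lemma LZb (m n : nat) (z : vert m n -> int) (j : 'I_n) :
  \sum_(c : vert m n) z c * Delta c (inr j) = m%:Z * z (inr j) - \sum_(i : 'I_m) z (inl i).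
Proof.
rewrite big_sumType /=.
rewrite [X in _ + X](bigD1 j) //= [X in _ + (_ + X)]big1 => [|j' hj'].
  rewrite /Delta /= eq_inr eqxx /= -sumrN.
  rewrite (eq_bigr (fun i => - z (inl i))) => [|i _]; first by ring.
  by rewrite /Delta /=; ring.
rewrite /Delta /= eq_inr.
have -> : (j == j') = false by apply/negbTE; rewrite eq_sym.
by rewrite /=; ring.
Qed.

Definition fa (m n : nat) (w : config m n) (B : int) : int :=
  \sum_(i : 'I_m) ((w (inl i) + B) %/ n%:Z)%Z.
Definition fb (m n : nat) (w : config m n) (A : int) : int :=
  \sum_(j : 'I_n) ((w (inr j) + A) %/ m%:Z)%Z.
Arguments fa {m n}.
Arguments fb {m n}.

Lemma sum_adjust (N : nat) (g : 'I_N -> int) (i0 : 'I_N) (d : int) :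
  \sum_i (if i == i0 then g i - d else g i) = \sum_i g i - d.
Proof.
rewrite (bigD1 i0) //= eqxx [X in _ = X - _](bigD1 i0) //=.
rewrite (eq_bigr g) => [|i /negbTE -> //]; ring.
Qed.

Lemma mul_fl_le (n : nat) (x : int) : (0 < n)%N -> n%:Z * (x %/ n%:Z)%Z <= x.
Proof. move=> hn; nia. Qed.

Lemma le_fl_of_mul (n : nat) (x q : int) : (0 < n)%N -> n%:Z * q <= x -> q <= (x %/ n%:Z)%Z.
Proof. move=> hn; nia. Qed.

Lemma eff_of_AB (m n : nat) (w : config m n) A B : (0 < m)%N -> (0 < n)%N ->
  A <= fa w B -> B <= fb w A -> effective w.
Proof.
move=> hm hn hA hB.
pose i0 := Ordinal hm. pose j0 := Ordinal hn.
pose ga := fun i : 'I_m => ((w (inl i) + B) %/ n%:Z)%Z.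
pose gb := fun j : 'I_n => ((w (inr j) + A) %/ m%:Z)%Z.
pose za := fun i : 'I_m => if i == i0 then ga i - (fa w B - A) else ga i.
pose zb := fun j : 'I_n => if j == j0 then gb j - (fb w A - B) else gb j.
pose z := fun c : vert m n => match c with inl i => za i | inr j => zb j end.
have sa : \sum_i za i = A by rewrite /za (@sum_adjust _ ga) /fa; ring.
have sb : \sum_j zb j = B by rewrite /zb (@sum_adjust _ gb) /fb; ring.
exists (fun x => w x - \sum_(c : vert m n) z c * Delta c x); split; last first.
  by exists z => x; ring.
case=> [i|j].
- rewrite LZa /= sb.
  have h1 : za i <= ga i by rewrite /za; case: eqP => _; lia.
  have h2 : n%:Z * za i <= n%:Z * ga i by apply: ler_wpM2l.
  have h3 := @mul_fl_le n (w (inl i) + B) hn.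
  rewrite /ga in h2; lia.
- rewrite LZb /= sa.
  have h1 : zb j <= gb j by rewrite /zb; case: eqP => _; lia.
  have h2 : m%:Z * zb j <= m%:Z * gb j by apply: ler_wpM2l.
  have h3 := @mul_fl_le m (w (inr j) + A) hm.
  rewrite /gb in h2; lia.
Qed.

Lemma AB_of_eff (m n : nat) (w : config m n) : (0 < m)%N -> (0 < n)%N ->
  effective w -> exists A B, A <= fa w B /\ B <= fb w A.
Proof.
move=> hm hn [f [hf [z hz]]].
exists (\sum_i z (inl i)), (\sum_j z (inr j)); split.
- apply: ler_sum => i _; apply: le_fl_of_mul => //.
  have := hz (inl i); rewrite LZa => h.
  have h2 := hf (inl i).
  move: h h2; set S := \sum_(j < n) z (inr j) => h h2.
  have -> : n%:Z * z (inl i) = w (inl i) - f (inl i) + S by rewrite h; ring.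
  by rewrite lerD2r gerBl.
- apply: ler_sum => j _; apply: le_fl_of_mul => //.
  have := hz (inr j); rewrite LZb => h.
  have h2 := hf (inr j).
  move: h h2; set S := \sum_(i < m) z (inl i) => h h2.
  have -> : m%:Z * z (inr j) = w (inr j) - f (inr j) + S by rewrite h; ring.
  by rewrite lerD2r gerBl.
Qed.


Lemma fl_mono (m : nat) (x y : int) : (0 < m)%N -> x <= y -> (x %/ m%:Z)%Z <= (y %/ m%:Z)%Z.
Proof. move=> *; nia. Qed.

Lemma div_addmul (n : nat) (x k : int) : (0 < n)%N -> ((x + n%:Z * k) %/ n%:Z)%Z = (x %/ n%:Z)%Z + k.
Proof. move=> *; nia. Qed.

Lemma mod_window (n : nat) (B : int) : (0 < n)%N ->
  (absz ((-B) %% n%:Z)%Z < n)%N /\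
  B = - (absz ((-B) %% n%:Z)%Z)%:Z + n%:Z * (- ((-B) %/ n%:Z)%Z).
Proof. move=> hn; split; nia. Qed.

Lemma fb_mono (m n : nat) (w : config m n) A A' : (0 < m)%N -> A <= A' -> fb w A <= fb w A'.
Proof. move=> hm hA; apply: ler_sum => j _; apply: fl_mono => //; lia. Qed.

Lemma fa_per (m n : nat) (w : config m n) B k : (0 < n)%N ->
  fa w (B + n%:Z * k) = fa w B + m%:Z * k.
Proof.
move=> hn; rewrite /fa (eq_bigr (fun i => ((w (inl i) + B) %/ n%:Z)%Z + k)).
  by rewrite big_split /= sum_const_int.
by move=> i _; rewrite addrA div_addmul.
Qed.

Lemma fb_per (m n : nat) (w : config m n) A k : (0 < m)%N ->
  fb w (A + m%:Z * k) = fb w A + n%:Z * k.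
Proof.
move=> hm; rewrite /fb (eq_bigr (fun j => ((w (inr j) + A) %/ m%:Z)%Z + k)).
  by rewrite big_split /= sum_const_int.
by move=> j _; rewrite addrA div_addmul.
Qed.

Lemma noneff_le (m n : nat) (w : config m n) : (0 < m)%N -> (0 < n)%N ->
  ~ effective w -> forall B, fb w (fa w B) < B.
Proof.
move=> hm hn H B; rewrite ltNge; apply/negP => h; apply: H.
exact: (eff_of_AB hm hn (lexx _) h).
Qed.

Lemma noneff_of (m n : nat) (w : config m n) : (0 < m)%N -> (0 < n)%N ->
  (forall B, fb w (fa w B) < B) -> ~ effective w.
Proof.
move=> hm hn H /(AB_of_eff hm hn) [A [B [hA hB]]].
have := H B; have := fb_mono w hm hA.
move=> h1 h2; have := le_lt_trans hB (le_lt_trans h1 h2); by rewrite ltxx.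
Qed.

Lemma window (m n : nat) (w : config m n) : (0 < m)%N -> (0 < n)%N ->
  (forall i : nat, (i < n)%N -> fb w (fa w (- i%:Z)) < - i%:Z) ->
  forall B, fb w (fa w B) < B.
Proof.
move=> hm hn H B.
have [hi hB] := mod_window B hn.
move: (absz ((-B) %% n%:Z)%Z) (- ((-B) %/ n%:Z)%Z) hi hB => i k hi ->.
by rewrite fa_per // fb_per // ltrD2r; apply: H.
Qed.

Definition Pc (m n : nat) (w : config m n) : int := \sum_(a : 'I_m) ((w (inl a)) %/ n%:Z)%Z.
Definition tc (m n : nat) (w : config m n) (i : nat) : int :=
  \sum_(a : 'I_m) (if ((w (inl a)) %% n%:Z)%Z < i%:Z then 1 else 0).
Definition Dc (m n : nat) (u : config m n) (j : 'I_n) : int := u (inr j) + Pc u + 1 - tc u j.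
Arguments Pc {m n}.
Arguments tc {m n}.
Arguments Dc {m n}.

Lemma div_sub_small (n i : nat) (x : int) : (0 < n)%N -> (i < n)%N ->
  ((x - i%:Z) %/ n%:Z)%Z = (x %/ n%:Z)%Z - (if (x %% n%:Z)%Z < i%:Z then 1 else 0).
Proof. move=> hn hi; case: ifP => h /=; nia. Qed.

Lemma fa_neg (m n : nat) (w : config m n) (i : nat) : (0 < n)%N -> (i < n)%N ->
  fa w (- i%:Z) = Pc w - tc w i.
Proof.
move=> hn hi; rewrite /fa /Pc /tc -sumrB; apply: eq_bigr => a _.
by rewrite div_sub_small.
Qed.

Lemma oapp_insub (n : nat) (g : 'I_n -> int) (i : nat) (hi : (i < n)%N) :
  oapp g 0 (insub i) = g (Ordinal hi).
Proof. by rewrite insubT. Qed.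

Lemma oapp_insub_ord (n : nat) (g : 'I_n -> int) (j : 'I_n) :
  oapp g 0 (insub (val j)) = g j.
Proof. by rewrite valK. Qed.

Lemma count_gt (n k : nat) : (k < n)%N ->
  \sum_(i < n) (if (k%:Z < i%:Z) then 1 else 0 : int) = n%:Z - 1 - k%:Z.
Proof.
elim: n => [//|n IH] hk.
rewrite big_ord_recr /=.
case: (ltnP k n) => hkn.
  rewrite IH // ltz_nat hkn; lia.
have -> : k = n by apply/eqP; rewrite eqn_leq hkn -ltnS hk.
rewrite big1 => [|i _]; first by rewrite ltxx; lia.
by rewrite ltz_nat ltnNge (ltnW (ltn_ord i)).
Qed.

Lemma sum_tc (m n : nat) (w : config m n) : (0 < n)%N ->
  \sum_(i < n) tc w i = \sum_(a : 'I_m) (n%:Z - 1 - ((w (inl a)) %% n%:Z)%Z).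
Proof.
move=> hn; rewrite /tc exchange_big /=; apply: eq_bigr => a _.
have hr0 : 0 <= ((w (inl a)) %% n%:Z)%Z by apply: modz_ge0; rewrite eqz_nat -lt0n.
have hrn : ((w (inl a)) %% n%:Z)%Z < n%:Z by apply: ltz_pmod; rewrite ltz_nat.
move: hr0 hrn; case: ((w (inl a)) %% n%:Z)%Z => // k _; rewrite ltz_nat => hk.
by rewrite count_gt.
Qed.

Lemma degree_split (m n : nat) (w : config m n) :
  degree w = \sum_(a : 'I_m) w (inl a) + \sum_(j : 'I_n) w (inr j).
Proof. by rewrite /degree big_sumType. Qed.

Lemma sum_a_decomp (m n : nat) (w : config m n) : (0 < n)%N ->
  \sum_(a : 'I_m) w (inl a) = n%:Z * Pc w + (m%:Z * (n%:Z - 1) - \sum_(i < n) tc w i).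
Proof.
move=> hn; rewrite sum_tc // sumrB sum_const_int /Pc mulr_sumr.
have -> : \sum_(a : 'I_m) w (inl a) =
   \sum_(a : 'I_m) (n%:Z * ((w (inl a)) %/ n%:Z)%Z + ((w (inl a)) %% n%:Z)%Z).
  apply: eq_bigr => a _; rewrite mulrC; exact: divz_eq.
rewrite big_split /=; ring.
Qed.

Lemma wrap_ind (n i : nat) (x y : int) : (0 < n)%N -> x <= y ->
  (if (y %% n%:Z)%Z < i%:Z then 1 else 0 : int) <=
  (if (x %% n%:Z)%Z < i%:Z then 1 else 0) + ((y %/ n%:Z)%Z - (x %/ n%:Z)%Z).
Proof. move=> hn hxy; case: ifP => h1; case: ifP => h2; nia. Qed.

Lemma perj (u Pu Pw tu tw : int) : tu <= tw + Pu - Pw ->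
  Num.max (u + Pu + 1 - tu) 0 <= (u + Pu + 1 - tu) - (Num.min (u + Pw + 1) tw - tw).
Proof. move=> h; lia. Qed.

Lemma sum_lin (n : nat) (a b c d : 'I_n -> int) (p : int) :
  \sum_(j < n) (a j + p + 1 - b j - (c j - d j)) =
  \sum_(j < n) a j + n%:Z * p + n%:Z - \sum_(j < n) b j - \sum_(j < n) c j + \sum_(j < n) d j.
Proof.
rewrite sumrB sumrB big_split /= big_split /= sumrB !sum_const_int; ring.
Qed.

Lemma lower (m n : nat) (u : config m n) : (0 < m)%N -> (0 < n)%N ->
  (forall j, 0 <= u (inr j)) -> (forall j, u (inr j) < m%:Z) ->
  (forall i j : 'I_n, (i <= j)%N -> u (inr i) <= u (inr j)) ->
  forall f : config m n, (forall x, 0 <= f x) -> ~ effective (fun x => u x - f x) ->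
  \sum_(j : 'I_n) Num.max (Dc u j) 0 <= degree f.
Proof.
move=> hm hn hy0 hym hs f hf hne.
set w : config m n := fun x => u x - f x.
have H := noneff_le hm hn hne.
pose Ex := fun l : nat => oapp (fun j : 'I_n => u (inr j) + Pc w) 0 (insub l).
pose ex := fun l : nat => oapp (fun j : 'I_n => w (inr j) + Pc w) 0 (insub l).
have hC := @CA m hm n Ex ex (tc w).
have C : \sum_(j : 'I_n) (w (inr j) + Pc w) + n%:Z <=
         \sum_(j : 'I_n) Num.min (u (inr j) + Pc w + 1) (tc w j).
  have e1 : \sum_(j : 'I_n) (w (inr j) + Pc w) = \sum_(l < n) ex l.
    by apply: eq_bigr => j _; rewrite /ex oapp_insub_ord.
  have e2 : \sum_(j : 'I_n) Num.min (u (inr j) + Pc w + 1) (tc w j) =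
            \sum_(i < n) Num.min (Ex i + 1) (tc w i).
    by apply: eq_bigr => j _; rewrite /Ex oapp_insub_ord.
  rewrite e1 e2; apply: hC.
  - move=> i j hij hj.
    have hi : (i < n)%N by apply: leq_ltn_trans hj.
    rewrite /Ex (oapp_insub _ hi) (oapp_insub _ hj) /= lerD2r; exact: hs.
  - move=> i j hi hj.
    rewrite /Ex (oapp_insub _ hi) (oapp_insub _ hj) /=.
    have := hy0 (Ordinal hi); have := hym (Ordinal hj); lia.
  - move=> l hl.
    rewrite /Ex /ex (oapp_insub _ hl) (oapp_insub _ hl) /= /w lerD2r.
    by rewrite gerBl.
  - move=> i hi.
    have := H (- i%:Z); rewrite fa_neg // /fb.
    have -> : \sum_(j : 'I_n) ((w (inr j) + (Pc w - tc w i)) %/ m%:Z)%Z =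
              \sum_(l < n) fl m (ex l - tc w i).
      by apply: eq_bigr => j _; rewrite /ex oapp_insub_ord /fl addrA.
    move=> h; rewrite -[X in _ <= X](subrr (i%:Z + 1)) -PoszD addn1.
    have := h; set S := \sum_(l < n) fl m (ex l - tc w i); move=> h'; lia.
have W : forall j : 'I_n, tc u j <= tc w j + Pc u - Pc w.
  move=> j; rewrite /tc /Pc -addrA -sumrB -big_split /=.
  apply: ler_sum => a _; apply: wrap_ind => //.
  by rewrite /w gerBl.
have hdeg : degree f = degree u - degree w.
  by rewrite /degree /w sumrB; ring.
have dw := degree_split w; rewrite (sum_a_decomp w hn) in dw.
have du := degree_split u; rewrite (sum_a_decomp u hn) in du.
have step : \sum_(j : 'I_n) Num.max (Dc u j) 0 <=
   \sum_(j : 'I_n) ((u (inr j) + Pc u + 1 - tc u j) -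
        (Num.min (u (inr j) + Pc w + 1) (tc w j) - tc w j)).
  apply: ler_sum => j _; rewrite /Dc; apply: perj; exact: W.
apply: le_trans step _.
rewrite hdeg dw du.
rewrite (sum_lin (fun j : 'I_n => u (inr j)) (fun j : 'I_n => tc u j)
  (fun j : 'I_n => Num.min (u (inr j) + Pc w + 1) (tc w j)) (fun j : 'I_n => tc w j)).
have hsw : \sum_(j : 'I_n) (w (inr j) + Pc w) = \sum_(j : 'I_n) w (inr j) + n%:Z * Pc w.
  by rewrite big_split /= sum_const_int.
move: C; rewrite hsw.
set Sw := \sum_(j : 'I_n) w (inr j).
set Su := \sum_(j : 'I_n) u (inr j).
set Mn := \sum_(j : 'I_n) Num.min (u (inr j) + Pc w + 1) (tc w j).
set Tw := \sum_(i < n) tc w i.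
set Tu := \sum_(i < n) tc u i.
move=> C; lia.
Qed.

Lemma count_le (n i : nat) : (i < n)%N ->
  \sum_(j < n) (if (j <= i)%N then 1 else 0 : int) = (i.+1)%:Z.
Proof.
elim: n => [//|n IH] hi.
rewrite big_ord_recr /=.
case: (ltnP i n) => hin.
  by rewrite addr0; exact: IH.
have -> : i = n by apply/eqP; rewrite eqn_leq hin -ltnS hi.
rewrite (eq_bigr (fun _ => 1)) => [|j _]; last by rewrite (ltnW (ltn_ord j)).
by rewrite sum_const_int mulr1 -addn1 PoszD.
Qed.

Lemma tc_mono (m n : nat) (w : config m n) (j i : nat) : (j <= i)%N -> tc w j <= tc w i.
Proof.
move=> hji; apply: ler_sum => a _.
case: ifP => h1; case: ifP => h2 //.
have hz : j%:Z <= i%:Z by rewrite lez_nat.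
move: h1 h2 hz; set r := ((w (inl a)) %% n%:Z)%Z => h1 h2 hz.
have : r < j%:Z by rewrite h1.
have : ~~ (r < i%:Z) by rewrite h2.
rewrite -leNgt; lia.
Qed.

Lemma tc_bounds (m n : nat) (w : config m n) (i : nat) : 0 <= tc w i <= m%:Z.
Proof.
apply/andP; split.
  by apply: sumr_ge0 => a _; case: ifP.
have : tc w i <= \sum_(a < m) (1 : int).
  by apply: ler_sum => a _; case: ifP.
by rewrite sum_const_int mulr1.
Qed.

Lemma term_bound (m : nat) (y P tj ti : int) (b : bool) : (0 < m)%N ->
  (b -> tj <= ti) -> tj <= m%:Z -> 0 <= ti ->
  (((y - Num.max (y + P + 1 - tj) 0) + (P - ti)) %/ m%:Z)%Z <= (if b then -1 else 0).
Proof. move=> hm; case: b => h1 h2 h3; [have h4 := h1 erefl|]; nia. Qed.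

Lemma upper (m n : nat) (u : config m n) : (0 < m)%N -> (0 < n)%N ->
  let f : config m n := fun x => match x with inl _ => 0 | inr j => Num.max (Dc u j) 0 end in
  (forall x, 0 <= f x) /\ ~ effective (fun x => u x - f x) /\
  degree f = \sum_(j : 'I_n) Num.max (Dc u j) 0.
Proof.
move=> hm hn f; split; [|split].
- by case=> [a|j] //=; rewrite le_max lexx orbT.
- set w : config m n := fun x => u x - f x.
  apply: (noneff_of hm hn); apply: (window hm hn) => i hi.
  rewrite fa_neg //.
  have -> : Pc w = Pc u by apply: eq_bigr => a _; rewrite /w /= subr0.
  have -> : tc w i = tc u i by apply: eq_bigr => a _; rewrite /w /= subr0.
  have : fb w (Pc u - tc u i) <= \sum_(j < n) (if (j <= i)%N then -1 else 0 : int).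
    apply: ler_sum => j _; rewrite /w /= /Dc.
    have /andP [hj0 hjm] := tc_bounds u j.
    have /andP [hi0 him] := tc_bounds u i.
    apply: term_bound => //.
    by move=> hji; apply: tc_mono.
  have -> : \sum_(j < n) (if (j <= i)%N then -1 else 0 : int) =
            - \sum_(j < n) (if (j <= i)%N then 1 else 0 : int).
    by rewrite -sumrN; apply: eq_bigr => j _; case: ifP.
  rewrite count_le // => h.
  apply: le_lt_trans h _; rewrite ltrN2 ltz_nat; exact: ltnSn.
- rewrite degree_split big1 ?add0r //.
Qed.

Lemma card_sum (T : finType) (P : pred T) :
  (#|[set x | P x]|)%:Z = \sum_x (if P x then 1 else 0 : int).
Proof.
rewrite cardsE -sum1_card -natz natr_sum big_mkcond /=.
by apply: eq_bigr => x _; rewrite unfold_in; case: (P x).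
Qed.

Lemma qr_lemma (n : nat) (s : int) (Q R i : nat) : (0 < n)%N -> 0 <= s ->
  s + 1 = (n * Q + R)%N%:Z -> (R < n)%N -> (i < n)%N ->
  Q%:Z + ((i < R)%N)%:Z = (s %/ n%:Z)%Z + 1 - (if (s %% n%:Z)%Z < i%:Z then 1 else 0).
Proof.
move=> hn hs hQR hR hi.
case: ltnP => h1; case: ifP => h2 /=; nia.
Qed.

Lemma park_single (m n : nat) (u : config m n) (c : vert m n) :
  parking u -> ~~ is_sink c ->
  exists c', ~~ is_sink c' /\ u c' - Delta c c' < 0.
Proof.
move=> [h0 h1] hc.
have hne : [set c] != set0 by apply/set0Pn; exists c; rewrite in_set1.
have hall : forall x, x \in [set c] -> ~~ is_sink x by move=> x; rewrite in_set1 => /eqP ->.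
have [c' [hc' hlt]] := h1 [set c] hne hall.
by exists c'; split => //; move: hlt; rewrite /DeltaS big_set1.
Qed.

Lemma park_b (m n : nat) (u : config m n) (j : 'I_n) :
  parking u -> 0 <= u (inr j) /\ u (inr j) < m%:Z.
Proof.
move=> hp; have h0 := hp.1 (inr j) isT; split => //.
have [c' [hc' hlt]] := park_single hp (isT : ~~ is_sink (inr j)).
have hnn := hp.1 c' hc'.
move: hlt hnn; rewrite /Delta; case: c' hc' => [a|j'] hc' /=.
  lia.
rewrite eq_inr; case: eqP => [->|_]; lia.
Qed.

Lemma park_a (m n : nat) (u : config m n) (a : 'I_m) :
  parking u -> ~~ is_sink (inl a : vert m n) -> 0 <= u (inl a) /\ u (inl a) < n%:Z.
Proof.
move=> hp ha; have h0 := hp.1 (inl a) ha; split => //.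
have [c' [hc' hlt]] := park_single hp ha.
have hnn := hp.1 c' hc'.
move: hlt hnn; rewrite /Delta; case: c' hc' => [a'|j'] hc' /=.
  rewrite eq_inl; case: eqP => [->|_]; lia.
lia.
Qed.

Theorem theorem11p1 (m n : nat) (hm : (1 <= m)%N) (hn : (1 <= n)%N)
  (u : config m n) (sink : 'I_m) (hsink : val sink = m.-1)
  (hpark : parking u) (hsort : sorted_config u)
  (hnn : 0 <= u (inl sink))
  (Q R : nat) (hQR : u (inl sink) + 1 = (n * Q + R)%N%:Z) (hR : (R < n)%N) :
  rank_is u ((\sum_(i < n)
      Num.max 0 (Q%:Z + ((i < R)%N)%:Z + rvec u i - 1)) - 1).
Proof.
have hsinkE : forall a : 'I_m, is_sink (inl a : vert m n) = (a == sink).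
  move=> a; rewrite /is_sink; apply/eqP/eqP => [h|->//]; apply: val_inj; by rewrite h hsink.
have hxa : forall a : 'I_m, a != sink -> 0 <= u (inl a) /\ u (inl a) < n%:Z.
  by move=> a ha; apply: park_a => //; rewrite hsinkE.
have hS : \sum_(i < n) Num.max 0 (Q%:Z + ((i < R)%N)%:Z + rvec u i - 1) =
          \sum_(j : 'I_n) Num.max (Dc u j) 0.
  apply: eq_bigr => i _; rewrite maxC; congr Num.max.
  rewrite /Dc /rvec.
  have key : Pc u - tc u i + (#|[set i' : 'I_m | (val i' < m.-1)%N &&
                 (u (inl i') + 1 <= (val i)%:Z)]|)%:Z =
             (u (inl sink) %/ n%:Z)%Z - (if (u (inl sink) %% n%:Z)%Z < i%:Z then 1 else 0).
    rewrite card_sum /Pc /tc -sumrB -big_split /=.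
    rewrite (bigD1 sink) //= big1 ?addr0.
      have -> : (val sink < m.-1)%N = false by rewrite hsink ltnn.
      by rewrite /= addr0.
    move=> a ha.
    have [h0 h1] := hxa a ha.
    have ha' : (val a < m.-1)%N.
      have hv : (nat_of_ord a <> m.-1).
        move=> h; move/negP: ha; apply; apply/eqP/val_inj; rewrite /= h -hsink //.
      change (nat_of_ord a < m.-1)%N; have := ltn_ord a; lia.
    rewrite ha' /= divz_small ?modz_small; try (apply/andP; split; lia).
    case: ifP => h2; case: ifP => h3; lia.
  have := qr_lemma hn hnn hQR hR (ltn_ord i); lra.
rewrite hS /rank_is subrK.
split.
- have [hf0 [hfne hfdeg]] := upper u hm hn.
  by eexists; split; [exact: hf0 | split; [exact: hfne | exact: hfdeg]].
- move=> f hf hfne.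
  apply: (lower hm hn) => //.
  + by move=> j; have [] := park_b j hpark.
  + by move=> j; have [] := park_b j hpark.
  + exact: hsort.2.
Qed.
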